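(* Let $q$ be a power of $2$, let $b\in\mathbb{F}_q$ with $b\ne0$, and let $n\ge2$ be an integer. Let $r\ge0$ be such that $2^r$ divides $n+1$ but $2^{r+1}$ does not, and let $m\ge0$ be defined by $n+1=2^r(m+1)$. Assume $r\ge1$. If $q>m/2+1$, then there exists $a\in\mathbb{F}_q$ such that $\hat C_n(a,b)$ is LCD.
   Context: For $a,b\in\mathbb{F}_q$ and $n\ge 2$, $\hat T_n(a,b)$ denotes the $n\times n$ symmetric tridiagonal Toeplitz matrix over $\mathbb{F}_q$ with all diagonal entries equal to $a$, all entries on the first super- and sub-diagonals equal to $b$, and all other entries $0$. $\hat C_n(a,b)$ is the $[2n,n]$ linear code over $\mathbb{F}_q$ with generator matrix $[I_n\mid \hat T_n(a,b)]$. A linear code $C$ is LCD if $C\cap C^\perp=\{0\}$ (Euclidean dual). *)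

(* Defs.v *)
From mathcomp Require Import all_boot all_order all_algebra all_field.
Set Implicit Arguments. Unset Strict Implicit. Unset Printing Implicit Defensive.
Import GRing.Theory.
Local Open Scope ring_scope.

Definition hatT (F : fieldType) (n : nat) (a b : F) : 'M[F]_n :=
  \matrix_(i < n, j < n)
    if i == j then a
    else if ((i.+1 == j)%N || (j.+1 == i)%N) then b else 0.

(* Generator matrix [I_n | \hat T_n(a,b)] of the [2n, n] code \hat C_n(a,b). *)
Definition hatG (F : fieldType) (n : nat) (a b : F) : 'M[F]_(n, n + n) :=
  row_mx 1%:M (hatT n a b).

Definition in_code (F : fieldType) (k N : nat) (G : 'M[F]_(k, N)) (x : 'rV[F]_N) : Prop :=
  (x <= G)%MS.

Definition in_dual (F : fieldType) (k N : nat) (G : 'M[F]_(k, N)) (x : 'rV[F]_N) : Prop :=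
  forall c : 'rV[F]_N, in_code G c -> c *m x^T = 0.

Definition is_LCD (F : fieldType) (k N : nat) (G : 'M[F]_(k, N)) : Prop :=
  forall x : 'rV[F]_N, in_code G x -> in_dual G x -> x = 0.

(* Main.v *)
Require Import Defs.
From mathcomp Require Import all_boot all_order all_algebra all_field.
From mathcomp Require Import zify ring.
Set Implicit Arguments. Unset Strict Implicit. Unset Printing Implicit Defensive.
Import GRing.Theory.
Local Open Scope ring_scope.

Section Char2.
Variable R : nzRingType.
Hypothesis h2 : (2%:R : R) = 0.
Lemma addxx (x : R) : x + x = 0.
Proof. by rewrite -mulr2n -mulr_natr h2 mulr0. Qed.
Lemma oppc2 (x : R) : - x = x.
Proof. by apply/eqP; rewrite eq_sym -subr_eq0 opprK addxx. Qed.
End Char2.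

Fixpoint Wp (F : fieldType) (k : nat) : {poly F} :=
  match k with 0 => 0 | S k1 => match k1 with 0 => 1 | S k2 => Wp F k1 * 'X + Wp F k2 end end.
Arguments Wp {F} k.

Lemma WpSS (F : fieldType) k : Wp (k.+2) = Wp k.+1 * 'X + Wp k :> {poly F}.
Proof. by []. Qed.

Lemma Wp_add (F : fieldType) j k : Wp (j + k).+1 = Wp j.+1 * Wp k.+1 + Wp j * Wp k :> {poly F}.
Proof.
suff: Wp (j + k).+1 = Wp j.+1 * Wp k.+1 + Wp j * Wp k :> {poly F} /\
      Wp (j.+1 + k).+1 = Wp j.+2 * Wp k.+1 + Wp j.+1 * Wp k :> {poly F} by case.
elim: j => [|j [IH1 IH2]].
  split; first by rewrite /= mul1r mul0r addr0.
  rewrite add1n WpSS /=; case: k => [|k] /=; ring.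
split=> //.
rewrite addSn WpSS -addSn IH2 addSn IH1 !WpSS; ring.
Qed.

Lemma Wp_size (F : fieldType) k : size (Wp k : {poly F}) = k.
Proof.
suff: size (Wp k : {poly F}) = k /\ size (Wp k.+1 : {poly F}) = k.+1 by case.
elim: k => [|k [IH1 IH2]]; first by rewrite /= size_poly0 size_poly1.
have nz : (Wp k.+1 : {poly F}) != 0 by rewrite -size_poly_eq0 IH2.
split=> //; rewrite WpSS size_polyDl size_mulX ?IH2 ?IH1 //.
Qed.

Section Dbl.
Variable F : fieldType.
Hypothesis h2 : (2%:R : F) = 0.
Lemma h2p : (2%:R : {poly F}) = 0.
Proof. by rewrite -polyC_natr h2. Qed.

Lemma Wp_even k : Wp (k + k) = Wp k ^+ 2 * 'X :> {poly F}.
Proof.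
case: k => [|k]; first by rewrite /= expr0n mul0r.
rewrite addSn Wp_add WpSS.
have -> : Wp k.+1 * (Wp k.+1 * 'X + Wp k) + Wp k * Wp k.+1
  = Wp k.+1 ^+ 2 * 'X + (Wp k.+1 * Wp k) *+ 2 :> {poly F} by ring.
by rewrite -mulr_natr h2p mulr0 addr0.
Qed.

Lemma Wp_odd k : Wp (k + k).+1 = (Wp k.+1 + Wp k) ^+ 2 :> {poly F}.
Proof.
rewrite Wp_add.
have -> : (Wp k.+1 + Wp k) ^+ 2 = Wp k.+1 * Wp k.+1 + Wp k * Wp k + (Wp k.+1 * Wp k) *+ 2 :> {poly F} by ring.
by rewrite -mulr_natr h2p mulr0 addr0.
Qed.

Lemma Wp_pow r N (y : F) : y != 0 -> (Wp N).[y] != 0 -> (Wp (2 ^ r * N)%N).[y] != 0.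
Proof.
move=> y0 hN; elim: r => [|r IH]; first by rewrite expn0 mul1n.
rewrite expnS -mulnA mul2n -addnn Wp_even hornerE hornerE.
by rewrite hornerE mulf_neq0 // expf_neq0.
Qed.

End Dbl.

Section Fin.
Variable F : finFieldType.
Hypothesis h2 : (2%:R : F) = 0.

Lemma roots_bound (P : {poly F}) : P != 0 -> (forall y : F, y != 0 -> P.[y] = 0) -> (#|F|.-1 < size P)%N.
Proof.
move=> P0 hP; rewrite -(cardC1 (0 : F)) cardE.
apply: max_poly_roots => //; last exact: enum_uniq.
by apply/allP => y; rewrite mem_enum inE => /hP /eqP.
Qed.

Lemma exists_y (m : nat) : (m.+2 < 2 * #|F|)%N -> exists y : F, y != 0 /\ (Wp m.+1).[y] != 0.
Proof.
move=> hm.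
have [y /andP[y0 hy]|none] := pickP (fun y : F => (y != 0) && ((Wp m.+1).[y] != 0)).
  by exists y.
have hr : forall y : F, y != 0 -> (Wp m.+1).[y] = 0.
  by move=> y y0; move: (none y); rewrite /= y0 /= => /negbFE /eqP.
exfalso.
have := odd_double_half m.+1; set k := (m.+1)./2.
case: (odd m.+1) => /= hk.
  have e : m.+1 = (k + k).+1 by rewrite -hk -addnn add1n.
  have : (#|F|.-1 < size ((Wp k.+1 + Wp k)%R : {poly F}))%N.
    apply: roots_bound.
      by rewrite -size_poly_eq0 size_polyDl !Wp_size.
    move=> y /hr; rewrite e Wp_odd // hornerE => /eqP; rewrite expf_eq0 /= => /eqP.
    done.
  rewrite size_polyDl !Wp_size //.
  lia.
have e : m.+1 = k + k by rewrite -hk -addnn.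
have k0 : (0 < k)%N by lia.
have : (#|F|.-1 < size (Wp k : {poly F}))%N.
  apply: roots_bound.
    by rewrite -size_poly_eq0 Wp_size; lia.
  move=> y y0; move: (hr y y0); rewrite e Wp_even // !hornerE => /eqP.
  by rewrite mulf_eq0 (negbTE y0) orbF expf_eq0 /= => /eqP.
rewrite Wp_size.
lia.
Qed.
End Fin.

Section Inj.
Variable F : fieldType.
Hypothesis h2 : (2%:R : F) = 0.

Lemma sum_delta (N k : nat) (g : nat -> F) :
  \sum_(j < N) (if (j : nat) == k then g j else 0) = if (k < N)%N then g k else 0.
Proof.
case: ifP => hk.
  rewrite (bigD1 (Ordinal hk)) //= eqxx big1 ?addr0 // => j hj.
  case: eqP => // ejk; move: hj; suff -> : j = Ordinal hk by rewrite eqxx.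
  exact: val_inj.
apply: big1 => j _; case: eqP => // ejk.
by move: (ltn_ord j); rewrite ejk hk.
Qed.

Lemma sum_delta' (N k : nat) (g : nat -> F) :
  \sum_(j < N) (if (j : nat).+1 == k then g j else 0) =
  if k is k'.+1 then (if (k' < N)%N then g k' else 0) else 0.
Proof.
case: k => [|k]; first by rewrite big1.
by rewrite -sum_delta.
Qed.

Lemma split_summand (i j : nat) (c b x : F) :
  (if i == j then c else if (i.+1 == j) || (j.+1 == i) then b else 0) * x =
  (if j == i then c * x else 0) + (if j == i.+1 then b * x else 0) + (if j.+1 == i then b * x else 0).
Proof.
case: (ltngtP i j) => hij.
- have -> : (j.+1 == i) = false by apply/eqP; lia.
  case: (eqVneq j i.+1) => e.
    by rewrite /= add0r addr0.
  by rewrite /= mul0r !addr0.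
- have -> : (j == i.+1) = false by apply/eqP; lia.
  case: (eqVneq j.+1 i) => e /=; first by rewrite orbT !add0r.
  have -> : (i.+1 == j) = false by apply/eqP; lia.
  by rewrite mul0r !addr0.
- rewrite hij.
  have -> : (j == j.+1) = false by apply/eqP; lia.
  have -> : (j.+1 == j) = false by apply/eqP; lia.
  by rewrite !addr0.
Qed.

Lemma hatT_inj (n : nat) (c b : F) (v : 'cV[F]_n.+1) :
  b != 0 -> (Wp n.+2).[c / b] != 0 -> hatT n.+1 c b *m v = 0 -> v = 0.
Proof.
move=> b0 hW hv.
pose f := fun i => if (i < n.+1)%N then v (inord i) 0 else 0.
pose h := fun i => if i is i'.+1 then f i' else 0.
have vf : forall j : 'I_n.+1, v j 0 = f j by move=> j; rewrite /f ltn_ord inord_val.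
have eq : forall i, (i < n.+1)%N -> b * h i + c * h i.+1 + b * h i.+2 = 0.
  move=> i hi; have := congr1 (fun M : 'M[F]_(n.+1,1) => M (inord i) 0) hv; rewrite !mxE.
  under eq_bigr => j _ do rewrite mxE -val_eqE /= inordK // vf split_summand.
  rewrite !big_split /= (sum_delta _ _ (fun j => c * f j)) (sum_delta _ _ (fun j => b * f j)).
  rewrite (sum_delta' _ _ (fun j => b * f j)) hi => <-.
  have f0 : f i.+1 = 0 -> b * f i.+1 = 0 by move=> ->; rewrite mulr0.
  case: ifP => hh.
    rewrite /h; case: i hi hh {f0} => [|i] hi hh /=; rewrite ?(ltnW hi) ?mulr0 ?add0r ?addr0; ring.
  rewrite f0 ?addr0; last by rewrite /f hh.
  rewrite /h; case: i hi hh {f0} => [|i] hi hh /=; rewrite ?(ltnW hi) ?mulr0 ?add0r ?addr0; ring.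
have hrec : forall k, (k < n.+1)%N -> h k.+2 = c / b * h k.+1 + h k.
  move=> k hk; have := eq k hk => e.
  have e2 : b * h k.+2 = c * h k.+1 + b * h k.
    move/eqP: e; rewrite addrC addr_eq0 => /eqP ->; rewrite oppc2 //; ring.
  apply: (mulfI b0); rewrite e2; field; exact: b0.
pose y := c / b.
have pair : forall k, (k <= n.+1)%N -> h k = h 1%N * (Wp k).[y] /\ h k.+1 = h 1%N * (Wp k.+1).[y].
  elim=> [|k IH] hk.
    by rewrite /= hornerE mulr0 hornerE mulr1.
  have [_ IH2] := IH (ltnW hk); split=> //.
  rewrite hrec // IH2 (proj1 (IH (ltnW hk))) WpSS hornerD hornerMX /y; ring.
have h1 : h 1%N = 0.
  have [_ e] := pair n.+1 (leqnn _).
  have : h n.+2 = 0 by rewrite /h /f ltnn.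
  by rewrite e => /eqP; rewrite mulf_eq0 (negbTE hW) orbF => /eqP.
apply/matrixP => i j; rewrite ord1 !mxE vf.
have [e _] := pair i.+1 (ltn_ord i).
by move: e h1; rewrite /= => -> ->; rewrite mul0r.
Qed.
End Inj.

Lemma lcd_suff (F : fieldType) k N (G : 'M[F]_(k, N)) :
  (forall v : 'cV_k, G *m G^T *m v = 0 -> v = 0) -> is_LCD G.
Proof.
move=> hG x /submxP [y ->] hd.
have GX : G *m (y *m G)^T = 0.
  apply/row_matrixP => i; rewrite row_mul row0; apply: hd; exact: row_sub.
have : y^T = 0 by apply: hG; rewrite -mulmxA -trmx_mul.
by move=> /(congr1 trmx); rewrite trmxK trmx0 => ->; rewrite mul0mx.
Qed.

Lemma hatT_sym (F : fieldType) n (a b : F) : (hatT n a b)^T = hatT n a b.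
Proof.
by apply/matrixP => i j; rewrite !mxE eq_sym orbC.
Qed.

Lemma hatT_add1 (F : fieldType) n (a b : F) : 1%:M + hatT n a b = hatT n (a + 1) b.
Proof.
apply/matrixP => i j; rewrite !mxE; case: eqP => _ /=.
  by rewrite addrC.
by rewrite add0r.
Qed.

Lemma GGT (F : fieldType) n (a b : F) : (2%:R : F) = 0 ->
  hatG n a b *m (hatG n a b)^T = hatT n (a + 1) b *m hatT n (a + 1) b.
Proof.
move=> h2; rewrite /hatG tr_row_mx mul_row_col hatT_sym trmx1 mulmx1 -hatT_add1.
rewrite mulmxDl !mulmxDr !mul1mx mulmx1 addrA.
have -> : (1%:M : 'M[F]_n) + hatT n a b + hatT n a b = 1%:M.
  rewrite -addrA; have -> : hatT n a b + hatT n a b = 0.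
    by apply/matrixP => i j; rewrite !mxE addxx.
  by rewrite addr0.
by [].
Qed.

Theorem corollary2p5 (F : finFieldType) (n r m : nat) (b : F) :
  (exists k : nat, #|F| = (2 ^ k)%N) ->
  b != 0 ->
  (2 <= n)%N ->
  (2 ^ r %| n.+1)%N ->
  ~~ (2 ^ r.+1 %| n.+1)%N ->
  n.+1 = (2 ^ r * m.+1)%N ->
  (1 <= r)%N ->
  (m.+2 < 2 * #|F|)%N ->
  exists a : F, is_LCD (hatG n a b).
Proof.
move=> [k hk] b0 hn2 _ _ hn _ hm.
have h2 : (2%:R : F) = 0.
  have ch := card_finPcharP hk (isT : prime 2).
  by apply/eqP; rewrite -(dvdn_pcharf ch).
have [y [y0 hy]] := exists_y h2 hm.
have hW : (Wp n.+1).[y] != 0 by rewrite hn; apply: Wp_pow.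
exists (y * b + 1); apply: lcd_suff => v.
rewrite GGT // -addrA (addxx h2) addr0 -mulmxA.
case: n hn2 hW v {hn} => [|n] // _ hW v.
have inj := @hatT_inj F h2 n (y * b) b.
have e : y * b / b = y by rewrite mulfK.
rewrite e in inj.
by move=> /(inj _ b0 hW) /(inj _ b0 hW).
Qed.
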